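(* Let $(M,f,g)$ be an $(m,n)$-hypermodule over a commutative Krasner $(m,n)$-hyperring $(R,f',g')$ with scalar identity $1$, let $Q$ be a proper subhypermodule of $M$, and let $\phi:\mathcal{SH}(M)\to\mathcal{SH}(M)\cup\{\varnothing\}$ be a function such that $\phi(Q)$ is a subhypermodule of $M$ with $\phi(Q)\subseteq Q$. Then the following are equivalent: (1) $Q$ is an $n$-ary $\phi$-classical prime subhypermodule of $M$; (2) $Q/\phi(Q)$ is an $n$-ary weakly classical prime subhypermodule of $M/\phi(Q)$.
   Context: A commutative Krasner $(m,n)$-hyperring with scalar identity $1$ is a triple $(R,f',g')$ where $(R,f')$ is a canonical $m$-ary hypergroup with zero $0$, $(R,g')$ is a commutative $n$-ary semigroup, $g'$ is distributive over $f'$, $0$ is a zero element for $g'$, and $g'(x,1^{(n-1)})=x$. Notation: $x_i^j$ denotes $x_i,\dots,x_j$ and $x^{(k)}$ denotes $x$ repeated $k$ times. An $(m,n)$-hypermodule over $R$ is a triple $(M,f,g)$ with $(M,f)$ a canonical $m$-ary hypergroup with zero $0$ and $g:R^{n-1}\times M\to P^*(M)$ satisfying: $g(r_1^{n-1},f(x_1^m))=f(g(r_1^{n-1},x_1),\dots,g(r_1^{n-1},x_m))$; $g(r_1^{i-1},f'(s_1^m),r_{i+1}^{n-1},x)=f(g(r_1^{i-1},s_1,r_{i+1}^{n-1},x),\dots,g(r_1^{i-1},s_m,r_{i+1}^{n-1},x))$; $g(r_1^{i-1},g'(r_i^{i+n-1}),r_{i+n}^{2n-2},x)=g(r_1^{n-1},g(r_n^{2n-2},x))$;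 $g(r_1^{i-1},0,r_{i+1}^{n-1},x)=\{0\}$; moreover $g(1^{(n-1)},a)=\{a\}$. Operations on subsets are unions over elements. A subhypermodule is a nonempty $N\subseteq M$ with $(N,f)$ an $m$-ary subhypergroup and $g(R^{(n-1)},N)\subseteq N$; $\mathcal{SH}(M)$ is the set of subhypermodules of $M$. A proper subhypermodule $Q$ of $M$ is $n$-ary $\phi$-classical prime if $g(r_1^{n-1},a)\subseteq Q\setminus\phi(Q)$ ($r_i\in R$, $a\in M$) implies $g(r_i,1^{(n-2)},a)\subseteq Q$ for some $1\le i\le n-1$. A proper subhypermodule $Q$ of an $(m,n)$-hypermodule is $n$-ary weakly classical prime if $0\notin G(r_1^{n-1},x)\subseteq Q$ implies $G(r_i,1^{(n-2)},x)\subseteq Q$ for some $i$, where $G$ is the external operation and $0$ the zero. For a subhypermodule $N$, $M/N=\{f(a,N,0^{(m-2)}):a\in M\}$ is an $(m,n)$-hypermodule with $F(f(a_1,N,0^{(m-2)}),\dots,f(a_m,N,0^{(m-2)}))=\{f(t,N,0^{(m-2)}):t\in f(a_1^m)\}$ and $G(r_1^{n-1},f(a,N,0^{(m-2)}))=\{f(z,N,0^{(m-2)}):z\in g(r_1^{n-1},a)\}$, with zero $N$; for a subhypermodule $K\supseteq N$, $K/N=\{f(a,N,0^{(m-2)}):a\in K\}$. *)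

(* Defs.v *)
(* Sets are Prop-valued predicates; n-ary (hyper)operations act on
   sequences, and all axioms are imposed only on sequences of the right
   length (values on other lengths are irrelevant junk). Indices are 0-based. *)
From Stdlib Require Permutation.
From mathcomp Require Import all_boot.

Set Implicit Arguments.
Unset Strict Implicit.
Unset Printing Implicit Defensive.

Definition pset (T : Type) := T -> Prop.
Definition psub {T} (A B : pset T) := forall x, A x -> B x.
Definition pseteq {T} (A B : pset T) := forall x, A x <-> B x.
Definition psing {T} (x : T) : pset T := fun y => y = x.

Definition liftS {T U} (f : seq T -> pset U) (As : seq (pset T)) : pset U :=
  fun z => exists xs, List.Forall2 (fun x (A : pset T) => A x) xs As /\ f xs z.

Section Hyper.
Variable T : Type.
Variable m : nat.
Variable f : seq T -> pset T.

(* f(x_1^{i-1}, f(x_i^{i+m-1}), x_{i+m}^{2m-1}) for xs of length 2m-1, i 0-based *)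
Definition assocS (xs : seq T) (i : nat) : pset T :=
  liftS f (map psing (take i xs) ++ f (take m (drop i xs)) :: map psing (drop (i + m) xs)).

Definition hyp_assoc := forall xs i, size xs = (2 * m - 1)%N -> i < m ->
  pseteq (assocS xs i) (assocS xs 0).

Definition hyp_nonempty := forall xs, size xs = m -> exists z, f xs z.

Definition hyp_reproduction := forall xs i a, size xs = m -> i < m ->
  exists y, f (set_nth a xs i y) a.

Definition hyp_comm := forall xs ys, size xs = m -> Permutation.Permutation xs ys ->
  pseteq (f xs) (f ys).

Definition mary_hypergroup := [/\ hyp_nonempty, hyp_assoc & hyp_reproduction].

Definition is_identity (e : T) := forall x, pseteq (f (x :: nseq m.-1 e)) (psing x).

Definition is_inv (e a b : T) := f (a :: b :: nseq (m - 2) e) e.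

Definition canonical_hypergroup (e : T) :=
  [/\ mary_hypergroup, hyp_comm,
      is_identity e /\ (forall e', is_identity e' -> e' = e),
      (forall x, exists y, is_inv e x y /\ forall y', is_inv e x y' -> y' = y) &
      (* reversibility: if x in f(x_1^m) then
         x_i in f(x, x_1^{-1},..,x_{i-1}^{-1},x_{i+1}^{-1},..,x_m^{-1}) *)
      (forall x xs ys i, size xs = m -> size ys = m -> i < m -> f xs x ->
         (forall j, j < m -> j <> i -> is_inv e (nth x xs j) (nth x ys j)) ->
         f (x :: (take i ys ++ drop i.+1 ys)) (nth x xs i))].
End Hyper.

Definition krasner_hyperring (m n : nat) (R : Type) (f' : seq R -> pset R)
  (g' : seq R -> R) (zero one : R) :=
  [/\ canonical_hypergroup m f' zero,
      (forall xs i, size xs = (2 * n - 1)%N -> i < n ->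
         g' (take i xs ++ g' (take n (drop i xs)) :: drop (i + n) xs)
         = g' (take n.-1 xs ++ [:: g' (drop n.-1 xs)])),
      (forall xs ys, size xs = n -> Permutation.Permutation xs ys -> g' xs = g' ys),
      (forall rs xs i, size rs = n -> size xs = m -> i < n ->
         pseteq (fun z => exists y, f' xs y /\ z = g' (set_nth zero rs i y))
                (f' (map (fun x => g' (set_nth zero rs i x)) xs))) &
      (forall rs i, size rs = n -> i < n -> g' (set_nth zero rs i zero) = zero) /\
      (forall x, g' (x :: nseq n.-1 one) = x)].

Definition hypermodule (m n : nat) (R : Type) (f' : seq R -> pset R)
  (g' : seq R -> R) (zero one : R) (M : Type) (f : seq M -> pset M)
  (g : seq R -> M -> pset M) (zeroM : M) :=
  [/\ canonical_hypergroup m f zeroM,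
      (forall rs x, size rs = n.-1 -> exists z, g rs x z) /\
      (forall rs xs, size rs = n.-1 -> size xs = m ->
         pseteq (fun z => exists y, f xs y /\ g rs y z) (liftS f (map (g rs) xs))),
      (forall rs ss i x, size rs = n.-1 -> size ss = m -> i < n.-1 ->
         pseteq (fun z => exists s, f' ss s /\ g (set_nth zero rs i s) x z)
                (liftS f (map (fun s => g (set_nth zero rs i s) x) ss))),
      (forall rs i x, size rs = (2 * n - 2)%N -> i < n.-1 ->
         pseteq (g (take i rs ++ g' (take n (drop i rs)) :: drop (i + n) rs) x)
                (fun z => exists y, g (drop n.-1 rs) x y /\ g (take n.-1 rs) y z)) &
      (forall rs i x, size rs = n.-1 -> i < n.-1 ->
         pseteq (g (set_nth zero rs i zero) x) (psing zeroM)) /\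
      (forall a, pseteq (g (nseq n.-1 one) a) (psing a))].

Section Sub.
Variables (m n : nat) (R T : Type) (f : seq T -> pset T) (g : seq R -> T -> pset T).

Definition is_subhmod (N : pset T) :=
  [/\ exists x, N x,
      (forall xs, size xs = m -> List.Forall N xs -> psub (f xs) N),
      (* reproduction inside N: (N,f) is itself an m-ary hypergroup *)
      (forall xs i a, size xs = m -> i < m -> List.Forall N xs -> N a ->
         exists y, N y /\ f (set_nth a xs i y) a) &
      (forall rs x, size rs = n.-1 -> N x -> psub (g rs x) N)].

Definition hproper (N : pset T) := exists x, ~ N x.

Definition weakly_classical_prime (one : R) (z : T) (Q : pset T) :=
  [/\ is_subhmod Q, hproper Q &
      forall rs x, size rs = n.-1 -> ~ g rs x z -> psub (g rs x) Q ->
        exists2 i, i < n.-1 & psub (g (nth one rs i :: nseq (n - 2) one) x) Q].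

Definition phi_classical_prime (one : R) (phi : pset T -> pset T) (Q : pset T) :=
  [/\ is_subhmod Q, hproper Q &
      forall rs x, size rs = n.-1 ->
        psub (g rs x) (fun y => Q y /\ ~ phi Q y) ->
        exists2 i, i < n.-1 & psub (g (nth one rs i :: nseq (n - 2) one) x) Q].
End Sub.

Section Quot.
Variables (m : nat) (R M : Type) (f : seq M -> pset M) (g : seq R -> M -> pset M)
  (zeroM : M) (N : pset M).

Definition coset (a : M) : pset M :=
  fun z => exists y, N y /\ f (a :: y :: nseq (m - 2) zeroM) z.

Record qelt := QElt { qval : pset M; qvalP : exists a, qval = coset a }.

Definition qF (Cs : seq qelt) : pset qelt :=
  fun D => exists as_ t, map qval Cs = map coset as_ /\ f as_ t /\ qval D = coset t.

Definition qG (rs : seq R) (C : qelt) : pset qelt :=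
  fun D => exists a z, qval C = coset a /\ g rs a z /\ qval D = coset z.

(* zero of M/N: f(0, N, 0^{(m-2)}) (which equals N) *)
Definition qzero : qelt := @QElt (coset zeroM) (ex_intro _ zeroM erefl).

Definition qsub (K : pset M) : pset qelt :=
  fun C => exists a, K a /\ qval C = coset a.
End Quot.

(* Main.v *)
Require Import Defs.
From mathcomp Require Import all_boot.
From Stdlib Require Import FunctionalExtensionality PropExtensionality.

Theorem mainTheorem12 (m n : nat) (R : Type) (f' : seq R -> pset R)
  (g' : seq R -> R) (zero one : R) (M : Type) (f : seq M -> pset M)
  (g : seq R -> M -> pset M) (zeroM : M) (Q : pset M)
  (phi : pset M -> pset M) :
  2 <= m -> 2 <= n ->
  krasner_hyperring m n f' g' zero one ->
  hypermodule m n f' g' zero one f g zeroM ->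
  is_subhmod m n f g Q -> hproper Q ->
  (forall N, is_subhmod m n f g N ->
     is_subhmod m n f g (phi N) \/ (forall x, ~ phi N x)) ->
  is_subhmod m n f g (phi Q) -> psub (phi Q) Q ->
  (phi_classical_prime m n f g one phi Q <->
   weakly_classical_prime m n (@qF m M f zeroM (phi Q))
     (@qG m R M f g zeroM (phi Q)) one
     (qzero m f zeroM (phi Q)) (@qsub m M f zeroM (phi Q) Q)).
Proof.
case: m => [|[|m']] // _; case: n => [|[|n']] // _.
move=> _ HM HQ HQp _ HN HNQ.
case: HM => [Hcan [Hgne Hdist] _ _ [Hgz Hg1]].
case: Hcan => [Hhg Hcomm [Hid _] _ Hrev].
have HQ' := HQ.
case: HQ' => [[xQ HxQ] HQf HQrep HQg].
have HN' := HN.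
case: HN' => [[xN HxN] HNf HNrep HNg].
remember (phi Q) as N eqn:EN.
have Em : m'.+2 - 2 = m' by rewrite subn2.
have En : n'.+2 - 2 = n' by rewrite subn2.
have N0 : N zeroM.
  apply: (HNg (nseq n'.+1 zero) xN (size_nseq _ _) HxN).
  exact: ((Hgz (nseq n'.+1 zero) 0 xN (size_nseq _ _) erefl zeroM).2 erefl).
have Q0 : Q zeroM by apply: HNQ.
have Hid0 : forall x, f (x :: zeroM :: nseq m' zeroM) x.
  by move=> x; apply: ((Hid x x).2 erefl).

have Fn : forall (P : pset M), P zeroM -> forall k, List.Forall P (nseq k zeroM).
  by move=> P HP; elim=> [|k IH] //=; constructor.
have Sz : forall (x y : M), size (x :: y :: nseq m' zeroM) = m'.+2.
  by move=> x y; rewrite /= size_nseq.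
have Hcos : forall a z, coset m'.+2 f zeroM N a z <->
    exists y, N y /\ f (a :: y :: nseq m' zeroM) z.
  by move=> a z; rewrite /coset Em.
have Lself : forall z, coset m'.+2 f zeroM N z z.
  by move=> z; apply/Hcos; exists zeroM; split.
have L2 : forall a b, coset m'.+2 f zeroM N a = coset m'.+2 f zeroM N b -> Q b -> Q a.
  move=> a b Hab Qb; have := Lself a; rewrite Hab => /Hcos [y [Ny Hf]].
  apply: (HQf _ (Sz b y) _ a Hf).
  by constructor => //; constructor; [apply: HNQ | apply: Fn].
have L3 : forall z, coset m'.+2 f zeroM N z = coset m'.+2 f zeroM N zeroM -> N z.
  move=> z Hz; have := Lself z; rewrite Hz => /Hcos [y [Ny Hf]].
  apply: (HNf _ (Sz zeroM y) _ z Hf).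
  by constructor => //; constructor; [| apply: Fn].
have Nc0 : forall x, N x -> coset m'.+2 f zeroM N zeroM x.
  move=> x Nx; apply/Hcos; exists x; split => //.
  apply: ((Hcomm (x :: zeroM :: nseq m' zeroM) _ (Sz _ _) (Permutation.perm_swap _ _ _)) x).1.
  exact: Hid0.
have L4 : forall w, N w -> coset m'.+2 f zeroM N w = coset m'.+2 f zeroM N zeroM.
  move=> w Nw; apply: functional_extensionality => x.
  apply: propositional_extensionality; split.
  - move/Hcos=> [y [Ny Hf]]; apply: Nc0.
    apply: (HNf _ (Sz w y) _ x Hf).
    by constructor => //; constructor; [| apply: Fn].
  - move=> Hx.
    have Nx : N x.
      move/Hcos: Hx => [y [Ny Hf]].
      apply: (HNf _ (Sz zeroM y) _ x Hf).
      by constructor => //; constructor; [| apply: Fn].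
    have [y [Ny Hf]] := HNrep (w :: zeroM :: nseq m' zeroM) 1 x (Sz _ _) erefl
      (List.Forall_cons _ Nw (List.Forall_cons _ N0 (Fn _ N0 _))) Nx.
    by apply/Hcos; exists y.
have F2 : forall (P : pset M) s xs ys,
    List.Forall2 (fun x (A : pset M) => A x) ys (map (g s) xs) ->
    List.Forall (fun x => psub (g s x) P) xs -> List.Forall P ys /\ size ys = size xs.
  move=> P s; elim=> [|x xs IH] [|y ys] //=.
  - by move=> H; inversion H.
  - by move=> H; inversion H.
  - move=> /List.Forall2_cons_iff [Hy H2] /List.Forall_cons_iff [H3 H4].
    have [H5 H6] := IH ys H2 H4; split; last by rewrite H6.
    by constructor => //; apply: H3.

have L5 : forall s a a', size s = n'.+1 ->
    coset m'.+2 f zeroM N a = coset m'.+2 f zeroM N a' ->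
    psub (g s a) Q -> psub (g s a') Q.
  move=> s a a' hs Haa Hs z Hz.
  have := Lself a'; rewrite -Haa => /Hcos [y [Ny Hf]].
  have [ys [HF Hfz]] := (Hdist s _ hs (Sz a y) z).1 (ex_intro _ a' (conj Hf Hz)).
  have HFa : List.Forall (fun x => psub (g s x) Q) (a :: y :: nseq m' zeroM).
    constructor => //; constructor; first exact: (HQg s y hs (HNQ y Ny)).
    exact: (Fn (fun x => psub (g s x) Q) (HQg s zeroM hs Q0)).
  have [H1 H2] := F2 Q s _ ys HF HFa.
  by apply: (HQf ys _ H1 z Hfz); rewrite H2.
have Inv : forall vs, List.Forall N vs -> exists vs', size vs' = size vs /\
    List.Forall N vs' /\ forall j d, j < size vs ->
    is_inv m'.+2 f zeroM (nth d vs j) (nth d vs' j).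
  elim=> [|v vs IH] /=.
    by move=> _; exists [::]; split => //; split.
  move=> /List.Forall_cons_iff [Nv /IH [vs' [H1 [H2 H3]]]].
  have [y [Ny Hf]] := HNrep (v :: zeroM :: nseq m' zeroM) 1 zeroM (Sz _ _) erefl
      (List.Forall_cons _ Nv (List.Forall_cons _ N0 (Fn _ N0 _))) N0.
  exists (y :: vs'); split; first by rewrite /= H1.
  split; first by constructor.
  move=> [|j] d /=; last by apply: H3.
  by move=> _; rewrite /is_inv Em.
have L7 : forall u vs z, size vs = m'.+1 -> List.Forall N vs -> N z ->
    f (u :: vs) z -> N u.
  move=> u vs z Hs HF Nz Hf.
  have [vs' [H1 [H2 H3]]] := Inv vs HF.
  have E1 : size (u :: vs) = m'.+2 by rewrite /= Hs.
  have E2 : size (u :: vs') = m'.+2 by rewrite /= H1 Hs.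
  have := Hrev z (u :: vs) (u :: vs') 0 E1 E2 erefl Hf.
  have Hj : forall j, j < m'.+2 -> j <> 0 ->
      is_inv m'.+2 f zeroM (nth z (u :: vs) j) (nth z (u :: vs') j).
    by move=> [|j] // Hj _ /=; apply: H3; rewrite Hs.
  move=> /(_ Hj) /= Hf'.
  rewrite drop0 in Hf'.
  apply: (HNf (z :: vs') _ _ u Hf'); first (rewrite /= H1 Hs; reflexivity).
  by constructor.
have L6 : forall rs x a z, size rs = n'.+1 ->
    coset m'.+2 f zeroM N x = coset m'.+2 f zeroM N a -> g rs a z ->
    coset m'.+2 f zeroM N z = coset m'.+2 f zeroM N zeroM ->
    (forall u, g rs x u -> ~ N u) -> False.
  move=> rs x a z hs Hxa Hg Hz Hu.
  have := Lself a; rewrite -Hxa => /Hcos [y [Ny Hf]].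
  have [ys [HF Hfz]] := (Hdist rs _ hs (Sz x y) z).1 (ex_intro _ a (conj Hf Hg)).
  case: ys HF Hfz => [|u vs] HF; first by inversion HF.
  move: HF => /= /List.Forall2_cons_iff [Hgu HF] Hfz.
  have HFa : List.Forall (fun x => psub (g rs x) N) (y :: nseq m' zeroM).
    constructor; first exact: (HNg rs y hs Ny).
    exact: (Fn (fun x => psub (g rs x) N) (HNg rs zeroM hs N0)).
  have [H1 H2] := F2 N rs (y :: nseq m' zeroM) vs HF HFa.
  apply: (Hu u Hgu); apply: (L7 u vs z _ H1 (L3 z Hz) Hfz).
  by rewrite H2 /= size_nseq.

pose mk a := @QElt m'.+2 M f zeroM N (coset m'.+2 f zeroM N a) (ex_intro _ a erefl).
have MapSet : forall (A B : Type) (F : A -> B) x0 (s : seq A) i y, i < size s ->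
    map F (set_nth x0 s i y) = set_nth (F x0) (map F s) i (F y).
  move=> A B F x0; elim=> [|a s IH] [|i] y //= Hi.
  by rewrite IH.
have Reps : forall Cs, List.Forall (qsub Q) Cs ->
    exists cs, map (@qval m'.+2 M f zeroM N) Cs = map (coset m'.+2 f zeroM N) cs
      /\ List.Forall Q cs.
  elim=> [|C Cs IH]; first by move=> _; exists [::].
  move=> /List.Forall_cons_iff [[c [Qc Hc]] /IH [cs [H1 H2]]].
  by exists (c :: cs); rewrite /= H1 Hc; split => //; constructor.
have RepsQ : forall Cs as_, map (@qval m'.+2 M f zeroM N) Cs = map (coset m'.+2 f zeroM N) as_ ->
    List.Forall (qsub Q) Cs -> List.Forall Q as_.
  elim=> [|C Cs IH] [|a as_] //= H; case: H => H1 H2.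
  move=> /List.Forall_cons_iff [[c [Qc Hc]] HF].
  constructor; last exact: IH.
  by apply: (L2 a c) => //; rewrite -H1 Hc.
split.
- case=> [_ _ Hp]; split.
  + split.
    * by exists (qzero m'.+2 f zeroM N); exists zeroM.
    * move=> Cs HCs HF D [as_ [t [Hmap [Hft HD]]]].
      exists t; split => //.
      apply: (HQf as_ _ (RepsQ _ _ Hmap HF) t Hft).
      by rewrite -HCs -(size_map (@qval m'.+2 M f zeroM N)) Hmap size_map.
    * move=> Cs i A HCs Hi HF [a [Qa HA]].
      have [cs [Hmap HFc]] := Reps Cs HF.
      have Hsc : size cs = m'.+2.
        by rewrite -HCs -(size_map (@qval m'.+2 M f zeroM N)) Hmap size_map.
      have [y [Qy Hf]] := HQrep cs i a Hsc Hi HFc Qa.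
      exists (mk y); split; first by exists y.
      exists (set_nth a cs i y), a; split; last by split.
      rewrite MapSet; last by rewrite HCs.
      by rewrite Hmap HA MapSet ?Hsc.
    * move=> rs C hs [b [Qb HC]] D [a [z [HCa [Hg HD]]]].
      exists z; split => //.
      apply: (HQg rs a hs _ z Hg).
      by apply: (L2 a b) => //; rewrite -HCa HC.
  + case: HQp => x Hx; exists (mk x) => [[b [Qb Hb]]].
    exact: (Hx (L2 x b Hb Qb)).
  + move=> rs C hs Hnz Hsub.
    case: (qvalP C) => a Ha.
    have H1 : psub (g rs a) (fun y => Q y /\ ~ N y).
      move=> w Hw.
      have [b [Qb Hb]] : qsub Q (mk w) by apply: Hsub; exists a, w.
      split; first exact: (L2 w b Hb Qb).
      move=> Nw; apply: Hnz; exists a, w; split => //; split => //.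
      by rewrite /= L4.
    rewrite EN in H1.
    case: (Hp rs a hs H1) => i Hi Hs.
    exists i => // D [a' [z [HCa' [Hg HD]]]].
    exists z; split => //.
    apply: (L5 _ a a' _ _ Hs z Hg); first by rewrite /= size_nseq En.
    by rewrite -Ha -HCa'.
- case=> [_ _ Hp]; split => // rs x hs Hsub.
  rewrite -EN in Hsub.
  have Hnz : ~ qG g rs (mk x) (qzero m'.+2 f zeroM N).
    move=> [a [z [HC [Hg Hz]]]].
    apply: (L6 rs x a z hs HC Hg (esym Hz)) => u Hu; exact: (Hsub u Hu).2.
  have Hs : psub (qG g rs (mk x)) (qsub Q).
    move=> D [a [z [HC [Hg HD]]]]; exists z; split => //.
    apply: (L5 rs x a hs HC _ z Hg) => w Hw; exact: (Hsub w Hw).1.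
  case: (Hp rs (mk x) hs Hnz Hs) => i Hi Hs'.
  exists i => // w Hw.
  have [b [Qb Hb]] : qsub Q (mk w) by apply: Hs'; exists x, w.
  exact: (L2 w b Hb Qb).
Qed.
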